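(* For $\pi\in S_n$ and $w\in I_n$ let $\mathrm{inv}_w(\pi)=\#\big(\mathrm{Inv}(\pi)\cap\mathrm{Pair}(w)\big)$. Then for all $\sigma,\pi\in S_n$ and $w\in I_n$, $$(-1)^{\mathrm{inv}_w(\sigma\pi)}=(-1)^{\mathrm{inv}_w(\pi)}\cdot(-1)^{\mathrm{inv}_{\pi w\pi^{-1}}(\sigma)}.$$ Consequently the formula $\rho(\pi)C_w=(-1)^{\mathrm{inv}_w(\pi)}C_{\pi w\pi^{-1}}$ ($\pi\in S_n$, $w\in I_n$) defines a representation of $S_n$ on $V_n$, and for each $s\in S$ it agrees with $\rho(s)C_w=\mathrm{sign}(s;w)C_{sws}$.
   Context: $I_n$ is the set of involutions (including the identity) of $S_n$; $V_n$ is the $\mathbb{Q}$-vector space with basis $\{C_w:w\in I_n\}$. $\mathrm{Inv}(\pi)=\{\{i,j\}: (j-i)(\pi(j)-\pi(i))<0\}$. For $w\in I_n$, $\mathrm{Pair}(w)$ is the set of 2-cycles of $w$, regarded as unordered 2-element subsets of $[n]$. $S=\{s_i=(i,i+1):1\le i\le n-1\}$; $\mathrm{sign}(s;w)=-1$ if $sws=w$ and $s\in\mathrm{Des}(w)$, and $1$ otherwise, where $s_i\in\mathrm{Des}(w)$ iff $w(i)>w(i+1)$. *)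

(* Defs.v *)
From HB Require Import structures.
From mathcomp Require Import all_boot all_order all_algebra all_fingroup.
Set Implicit Arguments. Unset Strict Implicit. Unset Printing Implicit Defensive.
Import Order.TTheory GRing.Theory Num.Theory.

(* Conventions: [n] = {1..n} is modelled by 'I_n = {0..n-1}.  MathComp composes left-to-right:
   (p * q)%g x = q (p x).  Hence the paper's composite sigma pi (= sigma o pi)
   is (pi * sigma)%g, and pi w pi^{-1} is (pi^-1 * w * pi)%g. *)

Definition is_invol n (w : 'S_n) : bool := (w * w == 1)%g.
Notation invol n := {w : 'S_n | is_invol w}.

Definition Inv n (p : 'S_n) : {set {set 'I_n}} :=
  [set [set ij.1; ij.2] | ij : 'I_n * 'I_n &
     ((((ij.2 : nat)%:Z - (ij.1 : nat)%:Z) *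
       ((p ij.2 : nat)%:Z - (p ij.1 : nat)%:Z)) < 0)%R].

Definition Pair n (w : 'S_n) : {set {set 'I_n}} :=
  [set [set i; w i] | i : 'I_n & w i != i].

Definition invw n (w p : 'S_n) : nat := #|Inv p :&: Pair w|.

(* V_n = Q-vector space with basis C_w, w in I_n *)
Notation V n := {ffun invol n -> rat^o}.

(* C_x: basis vector for x (the zero vector if x is not an involution) *)
Definition C n (x : 'S_n) : V n := [ffun u : invol n => ((val u == x)%:R : rat)].

Definition rho n (p : 'S_n) (v : V n) : V n :=
  (\sum_(w : invol n) v w *: (((-1 : rat) ^+ invw (val w) p) *: C (p^-1 * val w * p)%g))%R.

(* sign(s_i; w) with s_i = (i, i+1) (0-indexed: i, j = i+1) *)
Definition sign n (i j : 'I_n) (w : 'S_n) : rat :=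
  let s := tperm i j in
  if ((s * w * s)%g == w) && (w j < w i)%N then (-1)%R else 1%R.

(* Main.v *)
Require Import Defs.
From HB Require Import structures.
From mathcomp Require Import all_boot all_order all_algebra all_fingroup.
Set Implicit Arguments. Unset Strict Implicit.
Import Order.TTheory GRing.Theory Num.Theory.

Section S_T1.
Local Open Scope ring_scope.

Lemma prodlt0 (a b c d : nat) :
  (((b%:Z - a%:Z) * (d%:Z - c%:Z)) < 0) =
  ((a < b) && (d < c))%N || ((b < a) && (c < d))%N.
Proof.
have [hab|hab|->] := ltngtP a b.
- have h : 0 < b%:Z - a%:Z by rewrite subr_gt0 ltz_nat.
  rewrite pmulr_rlt0 // subr_lt0 ltz_nat /=.
  by rewrite orbF.
- have h : b%:Z - a%:Z < 0 by rewrite subr_lt0 ltz_nat.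
  rewrite nmulr_rlt0 // subr_gt0 ltz_nat /=.
  by [].
- by rewrite subrr mul0r ltxx.
Qed.

End S_T1.


Lemma xorlt (x y u v : nat) : x != y -> u != v ->
  ((x < y) && (v < u)) || ((y < x) && (u < v)) = ((x < y) != (u < v)).
Proof.
by case: (ltngtP x y) => // _ _; case: (ltngtP u v).
Qed.

Lemma set2_pair (T : finType) (k l a b : T) : k != l ->
  [set k; l] = [set a; b] -> ((a == k) && (b == l)) || ((a == l) && (b == k)).
Proof.
move=> kl E.
have ha : a \in [set k; l] by rewrite E set21.
have hb : b \in [set k; l] by rewrite E set22.
have hk : k \in [set a; b] by rewrite -E set21.
have hl : l \in [set a; b] by rewrite -E set22.
move: ha hb hk hl; rewrite !inE.
case/orP=> /eqP ->; case/orP=> /eqP ->; rewrite ?eqxx //=.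
all: rewrite ?(eq_sym l k) ?orbb ?andbT ?orbT // .
- by move=> _ ->.
- by move=> ->.
Qed.

Lemma memInv n (p : 'S_n) (k l : 'I_n) : k != l ->
  ([set k; l] \in Inv p) = ((k < l)%N != (p k < p l)%N).
Proof.
move=> kl.
have pkl : (p k : nat) != p l by rewrite (inj_eq val_inj) (inj_eq perm_inj).
have kl' : (k : nat) != l by [].
apply/imsetP/idP.
- case=> [[a b]] /=; rewrite inE /= prodlt0 => cond E.
  case/orP: (set2_pair kl E) => /andP[/eqP ea /eqP eb]; subst a b.
  + by move: cond; rewrite xorlt.
  + move: cond pkl; case: (ltngtP k l) => hkl; case: (ltngtP (p k) (p l)) => hp //=.
- move=> h; exists (k, l) => //=.
  rewrite inE /= prodlt0; move: h pkl.
  case: (ltngtP k l) => hkl; case: (ltngtP (p k) (p l)) => hp //=.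
by rewrite hkl eqxx in kl'.
Qed.


Definition sg n (q : 'S_n) (S : {set 'I_n}) : rat :=
  if S \in Inv q then (-1)%R else 1%R.

Lemma invw_prod n (w q : 'S_n) :
  ((-1 : rat) ^+ invw w q = \prod_(S in Pair w) sg q S)%R.
Proof.
rewrite (bigID (mem (Inv q))) /= [X in (_ * X)%R]big1 ?mulr1; last first.
  by move=> S /andP[_ /negbTE h]; rewrite /sg h.
rewrite (eq_bigr (fun _ => (-1)%R)); last by move=> S /andP[_ h]; rewrite /sg h.
rewrite (eq_bigl (mem (Inv q :&: Pair w))); last by move=> S; rewrite !inE andbC.
by rewrite prodr_const.
Qed.

Lemma Pair_conj n (w p : 'S_n) :
  Pair (p^-1 * w * p)%g = (fun S : {set 'I_n} => p @: S) @: Pair w.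
Proof.
apply/setP => T; apply/imsetP/imsetP.
- case=> x; rewrite inE !permM => hx ->.
  exists [set (p^-1)%g x; w ((p^-1)%g x)].
    apply/imsetP; exists ((p^-1)%g x) => //; rewrite inE.
    apply: contra hx => /eqP ->; by rewrite permKV.
  by rewrite imsetU1 imset_set1 permKV.
- case=> S /imsetP [k]; rewrite inE => hk -> ->.
  exists (p k).
    rewrite inE !permM permK; apply: contra hk.
    by rewrite (inj_eq perm_inj).
  by rewrite imsetU1 imset_set1 !permM permK.
Qed.

Lemma sgM n (w p s : 'S_n) S : S \in Pair w ->
  sg (p * s)%g S = (sg p S * sg s (p @: S))%R.
Proof.
case/imsetP=> k; rewrite inE => hk ->.
have kl : k != w k by rewrite eq_sym.
have pkl : p k != p (w k) by rewrite (inj_eq perm_inj).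
rewrite imsetU1 imset_set1 /sg !memInv // !permM.
by case: (k < w k)%N; case: (p k < p (w k))%N; case: (s (p k) < s (p (w k)))%N;
  rewrite ?mulr1 ?mul1r ?mulrNN ?mulr1.
Qed.

Lemma cocycle n (sigma p w : 'S_n) :
  ((-1 : rat) ^+ invw w (p * sigma)%g =
     (-1) ^+ invw w p * (-1) ^+ invw (p^-1 * w * p)%g sigma)%R.
Proof.
rewrite !invw_prod Pair_conj (big_imset _ (h := fun S : {set 'I_n} => [set p x | x in S])); last first.
  move=> A B _ _; exact: (imset_inj (@perm_inj _ p)).
rewrite -big_split /=; apply: eq_bigr => S hS; exact: (sgM p sigma hS).
Qed.

Section S_T4.
Local Open Scope ring_scope.

Lemma conj_invol n (w p : 'S_n) : is_invol w -> is_invol (p^-1 * w * p)%g.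
Proof.
move=> /eqP h; apply/eqP.
by rewrite -!mulgA (mulgA p) mulgV mul1g (mulgA w) h mul1g mulVg.
Qed.

Lemma rhoD n (p : 'S_n) (u v : V n) : rho p (u + v) = rho p u + rho p v.
Proof.
rewrite /rho -big_split /=; apply: eq_bigr => w _.
by rewrite ffunE scalerDl.
Qed.

Lemma rhoZ n (p : 'S_n) a (u : V n) : rho p (a *: u) = a *: rho p u.
Proof.
rewrite /rho scaler_sumr; apply: eq_bigr => w _.
by rewrite ffunE !scalerA.
Qed.

Lemma rho0 n (p : 'S_n) : rho p 0 = 0.
Proof. by move: (rhoZ p 0 0); rewrite !scale0r. Qed.

Lemma rho_sum n (p : 'S_n) (I : finType) (F : I -> V n) :
  rho p (\sum_(i : I) F i) = \sum_(i : I) rho p (F i).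
Proof. exact: (big_morph _ (rhoD p) (rho0 p)). Qed.

Lemma rhoC n (p y : 'S_n) : is_invol y ->
  rho p (C y) = ((-1 : rat) ^+ invw y p) *: C (p^-1 * y * p)%g.
Proof.
move=> hy; rewrite /rho (bigD1 (exist _ y hy)) //= big1 ?addr0.
  by rewrite ffunE /= eqxx scale1r.
move=> w hw; rewrite ffunE.
have -> : (val w == y) = false.
  apply/negbTE; apply: contra hw => /eqP e.
  by apply/eqP; apply: val_inj.
by rewrite scale0r.
Qed.

Lemma expand n (v : V n) : \sum_(w : invol n) v w *: C (val w) = v.
Proof.
apply/ffunP => u; rewrite sum_ffunE (bigD1 u) //= big1 ?addr0.
  by rewrite !ffunE eqxx -[v u *: _]/(v u * 1) mulr1.
move=> w hw; rewrite !ffunE.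
have -> : (val u == val w) = false.
  by apply/negbTE; apply: contra hw => /eqP e; apply/eqP; apply: val_inj.
by rewrite scaler0.
Qed.

Lemma Inv1 n : Inv (1 : 'S_n) = set0.
Proof.
apply/setP => S; rewrite inE; apply/negbTE/negP => /imsetP [[a b]].
rewrite inE /= prodlt0 !perm1.
by case: (ltngtP a b).
Qed.

Lemma rho1 n (v : V n) : rho 1%g v = v.
Proof.
rewrite -{2}(expand v) /rho; apply: eq_bigr => w _.
by rewrite /invw Inv1 set0I cards0 expr0 scale1r invg1 mul1g mulg1.
Qed.

Lemma rhoM n (sigma p : 'S_n) (v : V n) : rho (p * sigma)%g v = rho sigma (rho p v).
Proof.
rewrite [rho p v]/rho rho_sum [LHS]/rho; apply: eq_bigr => w _.
rewrite !rhoZ rhoC; last by apply: conj_invol; exact: (valP w).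
by rewrite !scalerA -mulrA -cocycle invMg !mulgA.
Qed.

End S_T4.


Lemma adj n (i j k l : 'I_n) : val j = (val i).+1 -> k != l ->
  ((k < l)%N != (tperm i j k < tperm i j l)%N) -> [set k; l] = [set i; j].
Proof.
move=> hj kl.
have ij : (i : nat) != j by rewrite hj neq_ltn ltnSn.
case: tpermP => [hk|hk|hk hk']; case: tpermP => [hl|hl|hl hl']; subst => //.
- by rewrite eqxx in kl.
- move=> h; exfalso; move: h.
  rewrite [(j < l)%N]ltn_neqAle hj /=.
  have -> : (i.+1 != l) by rewrite -hj; apply/eqP => e; apply: hl'; apply: val_inj.
  by rewrite /= eqxx.
- by rewrite setUC.
- by rewrite eqxx in kl.
- move=> h; exfalso; move: h.
  rewrite [(j < l)%N]ltn_neqAle hj /=.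
  have -> : (i.+1 != l) by rewrite -hj; apply/eqP => e; apply: hl'; apply: val_inj.
  by rewrite /= eqxx.
- move=> h; exfalso; move: h.
  rewrite hj (ltnS k i) (leq_eqVlt k i).
  have -> : ((k : nat) == i) = false by apply/negbTE/eqP => e; apply: hk; apply: val_inj.
  by rewrite /= eqxx.
- move=> h; exfalso; move: h.
  rewrite hj (ltnS k i) (leq_eqVlt k i).
  have -> : ((k : nat) == i) = false by apply/negbTE/eqP => e; apply: hk; apply: val_inj.
  by rewrite /= eqxx.
- by rewrite eqxx.
Qed.

Lemma winv n (w : 'S_n) x : is_invol w -> w (w x) = x.
Proof. by move=> h; rewrite -permM (eqP h) perm1. Qed.

Lemma ij_neq n (i j : 'I_n) : val j = (val i).+1 -> i != j.
Proof. by move=> hj; rewrite -val_eqE /= hj neq_ltn ltnSn. Qed.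

Lemma sgs n (i j : 'I_n) (w : 'S_n) S : val j = (val i).+1 -> S \in Pair w ->
  sg (tperm i j) S = (if S == [set i; j] then (-1) else 1)%R.
Proof.
move=> hj; case/imsetP => k; rewrite inE => hk ->.
have kl : k != w k by rewrite eq_sym.
rewrite /sg memInv //.
have ij := ij_neq hj.
have lt_ij : (i < j)%N by rewrite hj.
case: (eqVneq [set k; w k] [set i; j]) => [E|NE].
- case/orP: (set2_pair ij (esym E)) => /andP[/eqP <- /eqP <-].
  + by rewrite ?tpermL ?tpermR; move: kl; rewrite -val_eqE; case: ltngtP.
  + by rewrite tpermL tpermR; move: kl; rewrite -val_eqE; case: ltngtP.
- case: ifP => // h; exfalso; move/eqP: NE; apply; exact: adj hj kl h.
Qed.

Lemma invw_s n (i j : 'I_n) (w : 'S_n) : val j = (val i).+1 ->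
  ((-1 : rat) ^+ invw w (tperm i j) = if [set i; j] \in Pair w then -1 else 1)%R.
Proof.
move=> hj; rewrite invw_prod; case: ifP => h.
- rewrite (bigD1 [set i; j]) //= (sgs hj h) eqxx big1 ?mulr1 //.
  by move=> S /andP[hS ne]; rewrite (sgs hj hS) (negbTE ne).
- apply: big1 => S hS; rewrite (sgs hj hS); case: eqP => // E.
  by rewrite E h in hS.
Qed.

Lemma pair_ij n (i j : 'I_n) (w : 'S_n) : is_invol w -> i != j ->
  ([set i; j] \in Pair w) = (w i == j).
Proof.
move=> hw ij; apply/imsetP/eqP.
- case=> k; rewrite inE => hk E.
  case/orP: (set2_pair ij E) => /andP[/eqP -> /eqP e] //.
  by rewrite -e winv.
- move=> e; exists i; first by rewrite inE e eq_sym.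
  by rewrite e.
Qed.

Lemma sign_eq n (i j : 'I_n) (w : 'S_n) : is_invol w -> val j = (val i).+1 ->
  sign i j w = (if w i == j then -1 else 1)%R.
Proof.
move=> hw hj; have ij := ij_neq hj.
have lt_ij : (i < j)%N by rewrite hj.
rewrite /sign; case: (eqVneq (w i) j) => h.
- have wj : w j = i by rewrite -h winv.
  have -> : (tperm i j * w * tperm i j)%g == w.
    apply/eqP/permP => x; rewrite !permM.
    case: (tpermP i j x) => [hx|hx|hx1 hx2].
    + by rewrite wj tpermL hx h.
    + by rewrite h tpermR hx wj.
    + rewrite tpermD //; apply/eqP => e.
      * by apply: hx2; rewrite -(winv x hw) -e h.
      * by apply: hx1; rewrite -(winv x hw) -e wj.
  by rewrite wj h lt_ij.
- case: eqP => //= E.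
  have := congr1 (fun q : 'S_n => q i) E; rewrite /= !permM tpermL.
  case: tpermP => hwj e.
  + by rewrite e eqxx in h.
  + by rewrite hwj -e ltnNge ltnW.
  + move=> e2; exfalso; move/eqP: ij; apply; apply: (@perm_inj _ w); by rewrite e2.
Qed.


Import GRing.Theory.
Local Open Scope ring_scope.

Theorem mainTheorem2 (n : nat) :
  (forall (sigma p w : 'S_n), is_invol w ->
     (-1 : rat) ^+ invw w (p * sigma)%g =
     (-1) ^+ invw w p * (-1) ^+ invw (p^-1 * w * p)%g sigma) /\
  (forall (p : 'S_n) (a : rat) (u v : V n),
     rho p (a *: u + v) = a *: rho p u + rho p v) /\
  (forall v : V n, rho 1%g v = v) /\
  (forall (sigma p : 'S_n) (v : V n), rho (p * sigma)%g v = rho sigma (rho p v)) /\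
  (forall (i j : 'I_n) (w : invol n), val j = (val i).+1 ->
     rho (tperm i j) (C (val w)) =
     sign i j (val w) *: C (tperm i j * val w * tperm i j)%g).
Proof.
split; first by move=> sigma p w _; exact: cocycle.
split; first by move=> p a u v; rewrite rhoD rhoZ.
split; first exact: rho1.
split; first exact: rhoM.
move=> i j w hj.
rewrite rhoC; last exact: (valP w).
rewrite tpermV (invw_s _ hj) (pair_ij (valP w) (ij_neq hj)) (sign_eq (valP w) hj).
by [].
Qed.
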